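(* Let $p=2$, $M=\mathbb{F}_2[x_1,\dots,x_N]/(x_1^2-x_1,\dots,x_N^2-x_N)$, and $1\le k\le N$. Let $\{f_I\}$ be a family of elements of $M$ indexed by the $k$-subsets $I$ of $[N]$, such that for every such $I$, $\deg\big(f_I-\prod_{i\in I}x_i\big)\le k-1$. Let $J$ be the ideal of $M$ generated by the $f_I$. Then $$\dim_{\mathbb{F}_2}(M/J)\le\sum_{j=0}^{k-1}\binom{N}{j}.$$
   Context: The degree of an element of $M$ is the degree of its unique multilinear representative. *)

(* Defs.v *)
From HB Require Import structures.
From mathcomp Require Import all_boot all_order all_algebra.
Set Implicit Arguments. Unset Strict Implicit. Unset Printing Implicit Defensive.
Import GRing.Theory.
Local Open Scope ring_scope.

(* Concrete model of M = F_2[x_1..x_N]/(x_i^2 - x_i): an element of M is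
   identified with its unique multilinear representative, i.e. with its
   coefficient function  S |-> coefficient of prod_{i in S} x_i,
   for S ranging over subsets of [N] = 'I_N.  Coefficients are taken in
   'F_2^o (= 'F_2 viewed as a vector space over itself), so that M is an
   F_2-vector space (vectType) of dimension 2^N. *)
Definition M (N : nat) := {ffun {set 'I_N} -> ('F_2)^o}.

(* Multiplication in M: x_A * x_B = x_(A cup B) since x_i^2 = x_i. *)
Definition Mmul (N : nat) (f g : M N) : M N :=
  [ffun S : {set 'I_N} =>
     \sum_(A : {set 'I_N}) \sum_(B : {set 'I_N} | A :|: B == S) f A * g B].

Definition Mmono (N : nat) (I : {set 'I_N}) : M N :=
  [ffun S : {set 'I_N} => (S == I)%:R].

(* deg f <= d  (degree of the multilinear representative; deg 0 = -oo). *)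
Definition Mdeg_le (N : nat) (f : M N) (d : nat) : Prop :=
  forall S : {set 'I_N}, f S != 0 -> (#|S| <= d)%N.

Definition gen_ideal (N k : nat) (f : {set 'I_N} -> M N) : {vspace M N} :=
  <<[seq Mmul g (f A) | g <- enum {: M N}, A <- enum [set A : {set 'I_N} | #|A| == k]]>>%VS.

(* Main.v *)
Require Import Defs.
From HB Require Import structures.
From mathcomp Require Import all_boot all_order all_algebra zify.
Import GRing.Theory.
Local Open Scope ring_scope.

Lemma ffZ N (a : ('F_2)^o) (g : M N) S : (a *: g) S = a * g S.
Proof. by rewrite /= ffunE. Qed.
Lemma ffD N (g h : M N) S : (g + h) S = g S + h S.
Proof. by rewrite /= ffunE. Qed.
Lemma ffB N (g h : M N) S : (g - h) S = g S - h S.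
Proof. by rewrite /= !ffunE. Qed.
Lemma ffM N (I S : {set 'I_N}) : Mmono I S = (S == I)%:R.
Proof. by rewrite ffunE. Qed.

Lemma decomp N (v : M N) : v = \sum_(T : {set 'I_N}) v T *: Mmono T.
Proof.
apply/ffunP=> S; rewrite sum_ffunE (bigD1 S) //= big1 => [|T /negPf nT].
  by rewrite ffZ ffM eqxx mulr1 addr0.
by rewrite ffZ ffM eq_sym nT mulr0.
Qed.
Lemma mono_part N (S I T : {set 'I_N}) : I \subset S ->
  \sum_(A : {set 'I_N}) \sum_(B : {set 'I_N} | A :|: B == T) Mmono (S :\: I) A * (B == I)%:R
  = (T == S)%:R.
Proof.
move=> IS; rewrite (bigD1 (S :\: I)) //=.
rewrite [X in _ + X]big1 => [|A /negPf nA]; last first.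
  by apply: big1 => B _; rewrite ffM nA mul0r.
rewrite addr0 big_mkcond (bigD1 I) //= big1 => [|B /negPf nB]; last first.
  by case: ifP => // _; rewrite nB mulr0.
rewrite addr0 ffM !eqxx mulr1.
have -> : S :\: I :|: I = S.
  apply/setP=> x; rewrite !inE; case xI: (x \in I) => /=.
    by rewrite (subsetP IS x xI).
  by case: (x \in S).
by rewrite eq_sym; case: (T == S).
Qed.
Lemma gS_formula N (x g r : M N) (I T : {set 'I_N}) : g = Mmono I + r ->
  (Mmul x g) T = \sum_(A : {set 'I_N}) \sum_(B : {set 'I_N} | A :|: B == T) x A * (B == I)%:R
   + \sum_(A : {set 'I_N}) \sum_(B : {set 'I_N} | A :|: B == T) x A * r B.
Proof.
move=> ->; rewrite /Mmul ffunE -big_split /=; apply: eq_bigr => A _.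
rewrite -big_split /=; apply: eq_bigr => B _.
by rewrite ffD ffM mulrDr.
Qed.

Lemma gS_err N k (f : {set 'I_N} -> M N) (S I : {set 'I_N}) :
  (1 <= k)%N -> #|I| = k -> I \subset S ->
  Mdeg_le (f I - Mmono I) (k - 1) ->
  forall T, (Mmul (Mmono (S :\: I)) (f I) - Mmono S) T != 0 -> (#|T| < #|S|)%N.
Proof.
move=> k1 cI IS hr T.
set r := f I - Mmono I.
have fI : f I = Mmono I + r by rewrite /r addrC subrK.
rewrite ffB (@gS_formula _ (Mmono (S :\: I)) _ _ _ T fI) mono_part // ffM addrAC subrr add0r.
rewrite ltnNge; apply: contra => hle.
apply/eqP; apply: big1 => A _; apply: big1 => B /eqP hAB.
rewrite ffM; case: eqP => [eA|]; last by rewrite mul0r.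
have [rB0|nB] := eqVneq (r B) 0; first by rewrite rB0 mulr0.
have := hr B nB; rewrite -/r => hB.
exfalso; move: hle; apply/negP; rewrite -ltnNge -hAB eA.
apply: (leq_ltn_trans (leq_card_setU _ _)).
rewrite cardsD (setIidPr IS) cI.
have kS : (k <= #|S|)%N by rewrite -cI subset_leq_card.
lia.
Qed.

Lemma card_small N k :
  #|[set T : {set 'I_N} | (#|T| < k)%N]| = (\sum_(0 <= j < k) 'C(N, j))%N.
Proof.
elim: k => [|k IH].
  by rewrite big_geq // (_ : [set _ | _] = set0) ?cards0 //; apply/setP=> T; rewrite !inE.
have -> : [set T : {set 'I_N} | (#|T| < k.+1)%N] =
   [set T : {set 'I_N} | (#|T| < k)%N] :|: [set T : {set 'I_N} | #|T| == k].
  by apply/setP => T; rewrite !inE ltnS leq_eqVlt orbC.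
rewrite cardsU (_ : _ :&: _ = set0) ?cards0 ?subn0 ?IH ?card_draws ?card_ord.
  by rewrite big_nat_recr.
apply/setP=> T; rewrite !inE ltn_neqAle; by case: eqP => _; rewrite ?andbF.
Qed.

Theorem lemma2p11 (N k : nat) (f : {set 'I_N} -> M N) :
  (1 <= k)%N -> (k <= N)%N ->
  (forall I : {set 'I_N}, #|I| = k -> Mdeg_le (f I - Mmono I) (k - 1)) ->
  (\dim (fullv : {vspace M N}) - \dim (gen_ideal k f) <= \sum_(0 <= j < k) 'C(N, j))%N.
Proof.
move=> k1 kN hf.
set J := gen_ideal k f.
set L := <<[seq Mmono T | T <- enum [set T : {set 'I_N} | (#|T| < k)%N]]>>%VS.
have inL : forall S : {set 'I_N}, (#|S| < k)%N -> Mmono S \in (J + L)%VS.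
  move=> S hS; apply: (subvP (addvSr J L)); apply: memv_span; apply: map_f.
  by rewrite mem_enum inE.
have claim : forall n (S : {set 'I_N}), (#|S| <= n)%N -> Mmono S \in (J + L)%VS.
  elim=> [|n IH] S hS; first by apply: inL; lia.
  case: (ltnP #|S| k) => hSk; first exact: inL.
  have : (0 < #|[set A : {set 'I_N} | A \subset S & #|A| == k]|)%N.
    by rewrite cards_draws bin_gt0.
  case/card_gt0P => I; rewrite inE => /andP [IS /eqP cI].
  set g := Mmul (Mmono (S :\: I)) (f I).
  have gJ : g \in J.
    rewrite /J /gen_ideal; apply: memv_span; apply: allpairs_f.
      by rewrite mem_enum memvf.
    by rewrite mem_enum inE cI.
  have -> : Mmono S = g - (g - Mmono S) by rewrite opprB addrCA subrr addr0.
  apply: memvB; first by apply: (subvP (addvSl J L)).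
  rewrite (@decomp _ (g - Mmono S)); apply: memv_suml => T _.
  have [->|nz] := eqVneq ((g - Mmono S) T) 0; first by rewrite scale0r mem0v.
  apply: memvZ; apply: IH; have := @gS_err _ _ _ _ _ k1 cI IS (hf I cI) T nz; lia.
have full : (fullv <= J + L)%VS.
  apply/subvP => v _; rewrite (@decomp _ v); apply: memv_suml => T _; apply: memvZ.
  exact: claim _ T (leqnn _).
have h1 := dimvS full.
move: (dimv_add_leqif J L) => [h2 _].
have h3 : (\dim L <= \sum_(0 <= j < k) 'C(N, j))%N.
  apply: leq_trans (dim_span _) _.
  by rewrite size_map -cardE card_small.
rewrite leq_subLR; apply: leq_trans h1 _; apply: leq_trans h2 _; by rewrite leq_add2l.
Qed.
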